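(* Let $p\in\mathbb N$ and let $f_1,\dots,f_p$ be infinitely differentiable functions of $t$. Define $g_{i+pn}=f^{(n)}_i$ for $i=1,\dots,p$, $n=0,1,2,\dots$, and $$f_{k+(p+1)m}=W(g_k,\dots,g_{k+m}),\qquad k=1,\dots,p+1,\ m=0,1,2,\dots$$ (this is consistent with the given $f_1,\dots,f_p$ for $m=0$), and set $f_{-p}=\dots=f_0=1$. Then the functions $f_j$, $j\ge -p$, satisfy $$f_{j-1}f'_j-f'_{j-1}f_j=f_{j-p-1}f_{j+p},\qquad j=1,2,\dots.$$
   Context: $W(y_0,\dots,y_m)=\det\bigl(y^{(i)}_j\bigr)_{i,j=0}^m$ denotes the Wronskian; $f^{(n)}$ is the $n$-th derivative with respect to $t$. *)

(* Defs.v *)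
From mathcomp Require Import all_boot all_order all_algebra.
From mathcomp Require Import all_classical all_reals all_analysis.
Set Implicit Arguments. Unset Strict Implicit. Unset Printing Implicit Defensive.
Import Order.TTheory GRing.Theory Num.Theory.
Local Open Scope ring_scope.

Section Defs.
Variable R : realType.

Definition wronskian (ys : nat -> R -> R) (m : nat) (t : R) : R :=
  \det (\matrix_(i < m.+1, j < m.+1) derive1n i (ys j) t).

(* g_{i+pn} = f_i^{(n)} for i = 1..p, n >= 0 ; i.e. for j >= 1,
   i = ((j-1) mod p) + 1, n = (j-1) div p.  (g_0 is unused.) *)
Definition gfun (p : nat) (f : nat -> R -> R) (j : nat) : R -> R :=
  derive1n ((j.-1) %/ p)%N (f (((j.-1) %% p).+1)%N).

(* f_j for j : int.  For j >= 1: j = k + (p+1) m with k = ((j-1) mod (p+1))+1,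
   m = (j-1) div (p+1), and f_j = W(g_k, ..., g_{k+m}).  For j <= 0: f_j = 1. *)
Definition ffun (p : nat) (f : nat -> R -> R) (j : int) : R -> R :=
  match j with
  | Posz (S j') =>
      wronskian (fun c => gfun p f (((j' %% p.+1).+1) + c)%N) (j' %/ p.+1)%N
  | _ => fun _ => 1
  end.
End Defs.

(* Main.v *)
Require Import Defs.
From mathcomp Require Import all_boot all_order all_algebra fingroup perm ring zify.
From mathcomp Require Import all_classical all_reals all_analysis.
Set Implicit Arguments. Unset Strict Implicit. Unset Printing Implicit Defensive.
Import Order.TTheory GRing.Theory Num.Theory.
Local Open Scope ring_scope.

Definition detf (R : comPzRingType) n (F : nat -> nat -> R) : R :=
  \det (\matrix_(i < n, j < n) F i j).

Lemma detf_ext (R : comPzRingType) n (F G : nat -> nat -> R) :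
  (forall i j, (i < n)%N -> (j < n)%N -> F i j = G i j) -> detf n F = detf n G.
Proof. by move=> H; rewrite /detf; congr (\det _); apply/matrixP => i j; rewrite !mxE H. Qed.

Lemma det2 (R : comPzRingType) (M : 'M[R]_2) :
  \det M = M ord0 ord0 * M ord_max ord_max - M ord0 ord_max * M ord_max ord0.
Proof.
rewrite (expand_det_row _ ord0) !big_ord_recl big_ord0 /cofactor !det_mx11 !mxE /=.
rewrite (_ : lift ord0 0 = ord_max :> 'I_2); last exact/val_inj.
rewrite (_ : lift ord_max 0 = ord0 :> 'I_2); last exact/val_inj.
rewrite /= expr0 expr1 !mul1r addr0 mulN1r mulrN.
by [].
Qed.

Lemma schur_key (R : comPzRingType) n m (A : 'M[R]_n) (B : 'M[R]_(n, m)) (C : 'M[R]_(m, n)) D :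
  \det (block_mx A B C D) * (\det A) ^+ m =
  \det A * \det (\det A *: D - C *m \adj A *m B).
Proof.
have := det_mulmx (block_mx A B C D) (block_mx 1%:M (- (\adj A *m B)) 0 ((\det A)%:M)).
rewrite mulmx_block det_ublock det1 det_scalar mul1r => <-.
rewrite !mulmx1 !mulmx0 !addr0 !mulmxN mulmxA mul_mx_adj mul_scalar_mx.
rewrite mul_mx_scalar addNr det_lblock; congr (_ * \det _).
by rewrite addrC mul_mx_scalar mulmxA.
Qed.

Lemma DJ_block (R : idomainType) n (A : 'M[R]_n) (B : 'M[R]_(n, 2)) (C : 'M[R]_(2, n)) (D : 'M[R]_2) :
  \det A != 0 ->
  \det (block_mx A B C D) * \det A =
  \det (block_mx A (col ord0 B) (row ord0 C) (D ord0 ord0)%:M) *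
  \det (block_mx A (col ord_max B) (row ord_max C) (D ord_max ord_max)%:M)
  - \det (block_mx A (col ord_max B) (row ord0 C) (D ord0 ord_max)%:M) *
  \det (block_mx A (col ord0 B) (row ord_max C) (D ord_max ord0)%:M).
Proof.
move=> nzA.
have E1 : forall i k, \det (block_mx A (col k B) (row i C) (D i k)%:M) =
    (\det A *: D - C *m \adj A *m B) i k.
  move=> i k; apply: (mulIf nzA).
  rewrite -[X in _ * X]expr1 schur_key det_mx11 mulrC; congr (_ * _).
  rewrite !mxE eqxx mulr1n; congr (_ - _).
  by apply: eq_bigr => l _; rewrite -row_mul !mxE.
have := schur_key A B C D; rewrite det2 -!E1 => H.
apply: (mulfI nzA); rewrite -H expr2; ring.
Qed.

Definition Mf (R : comPzRingType) n (F : nat -> nat -> R) (r c : nat) :=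
  detf (n+1) (fun i j => F (if (i < n)%N then i else n + r)%N
                           (if (j < n)%N then j else n + c)%N).

Lemma DJ_F (R : idomainType) n (F : nat -> nat -> R) :
  detf n F != 0 ->
  detf (n+2) F * detf n F = Mf n F 0 0 * Mf n F 1 1 - Mf n F 0 1 * Mf n F 1 0.
Proof.
move=> nz.
pose A := \matrix_(i < n, j < n) F i j.
pose B := \matrix_(i < n, j < 2) F i (n + j)%N.
pose C := \matrix_(i < 2, j < n) F (n + i)%N j.
pose D := \matrix_(i < 2, j < 2) F (n + i)%N (n + j)%N.
have EN : \matrix_(i < n + 2, j < n + 2) F i j = block_mx A B C D.
  apply/matrixP => i j; rewrite !mxE.
  case: (splitP i) => i2 ->; rewrite !mxE; case: (splitP j) => j2 ->; by rewrite !mxE.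
have EM : forall r c : 'I_2, Mf n F r c =
    \det (block_mx A (col c B) (row r C) (D r c)%:M).
  move=> r c; rewrite /Mf /detf; congr (\det _); apply/matrixP => i j; rewrite !mxE.
  case: (splitP i) => i2 Ei; rewrite !mxE; case: (splitP j) => j2 Ej; rewrite !mxE /=.
  all: rewrite ?Ei ?Ej /= //.
  by rewrite (ord1 i2) (ord1 j2) eqxx mulr1n.
have := DJ_block B C D nz.
rewrite -EN -!EM /=.
by [].
Qed.

Lemma detf_horner (R : comNzRingType) n (G : nat -> nat -> {poly R}) x :
  (detf n G).[x] = detf n (fun i j => (G i j).[x]).
Proof.
rewrite /detf -[LHS]/(horner_eval x _) -det_map_mx; congr (\det _).
by apply/matrixP => i j; rewrite !mxE.
Qed.

Lemma DJ (R : fieldType) n (F : nat -> nat -> R) :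
  detf (n+2) F * detf n F = Mf n F 0 0 * Mf n F 1 1 - Mf n F 0 1 * Mf n F 1 0.
Proof.
pose Fp i j : {poly R} := (F i j)%:P + (if (i == j) && (i < n)%N then 'X else 0).
have nz : detf n Fp != 0.
  have -> : detf n Fp = char_poly (- \matrix_(i < n, j < n) F i j).
    rewrite /detf /char_poly /char_poly_mx; congr (\det _).
    apply/matrixP => i j; rewrite !mxE /Fp ltn_ord andbT polyCN opprK addrC.
    by case: (i == j :> nat) (val_eqE i j) => <-.
  exact/monic_neq0/char_poly_monic.
have Ev : forall i j, (Fp i j).[0] = F i j.
  by move=> i j; rewrite /Fp hornerD hornerC; case: ifP; rewrite ?hornerX ?horner0 addr0.
have E1 : forall m, (detf m Fp).[0] = detf m F.
  by move=> m; rewrite detf_horner; apply: detf_ext => *; exact: Ev.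
have E2 : forall r c, (Mf n Fp r c).[0] = Mf n F r c.
  by move=> r c; rewrite /Mf detf_horner; apply: detf_ext => *; exact: Ev.
have := DJ_F nz => /(congr1 (fun q => q.[0])).
by rewrite !hornerE !E1 !E2.
Qed.

Definition sw (m j : nat) := if j == m then m.+1 else if j == m.+1 then m else j.
Definition cyc (m j : nat) := if (j < m)%N then j.+1 else if j == m then 0%N else j.

Lemma detf_sw (R : comNzRingType) n m (H : nat -> nat -> R) : (m.+1 < n)%N ->
  detf n (fun i j => H i (sw m j)) = - detf n H.
Proof.
move=> lt; have lt' : (m < n)%N by apply: ltnW.
pose j1 := Ordinal lt'; pose j2 := Ordinal lt.
have -> : detf n (fun i j => H i (sw m j)) = \det (xcol j1 j2 (\matrix_(i<n, j<n) H i j)).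
  rewrite /detf; congr (\det _); apply/matrixP => i j; rewrite !mxE.
  rewrite /sw; case: tpermP => [->|->|/eqP ne1 /eqP ne2] /=; rewrite ?eqxx //.
    by rewrite (gtn_eqF (ltnSn m)).
  by move: ne1 ne2; rewrite -!val_eqE /= => /negPf -> /negPf ->.
rewrite xcolE det_mulmx /tperm_mx det_perm odd_tperm.
have -> : (j1 != j2) by rewrite -val_eqE /= eqn_leq ltnn andbF.
by rewrite expr1 mulrN1.
Qed.

Lemma cycS m j : cyc m.+1 j = cyc m (sw m j).
Proof.
rewrite /cyc /sw.
by repeat case: ifP; move=> *; try lia.
Qed.

Lemma detf_cyc (R : comNzRingType) n m (G : nat -> nat -> R) : (m < n)%N ->
  detf n (fun i j => G i (cyc m j)) = (-1) ^+ m * detf n G.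
Proof.
elim: m => [|m IH] lt.
  rewrite expr0 mul1r; apply: detf_ext => i j _ _; rewrite /cyc /=.
  by case: eqP => [->|].
rewrite (@detf_ext _ _ _ (fun i j => G i (cyc m (sw m j)))); last by move=> i j _ _; rewrite cycS.
rewrite (detf_sw (fun i j => G i (cyc m j)) lt) IH ?exprS ?mulN1r //.
all: try lia. by rewrite mulNr.
Qed.

Lemma detf_e0 (R : comNzRingType) n (H : nat -> nat -> R) :
  detf n.+1 (fun i j => if j == n then (i == 0%N)%:R else H i j) =
  (-1) ^+ n * detf n (fun i j => H i.+1 j).
Proof.
rewrite /detf (expand_det_col _ ord_max) big_ord_recl big1 ?addr0.
  rewrite !mxE /= eqxx mul1r /cofactor add0n; congr (_ * \det _).
  apply/matrixP => i j; rewrite !mxE /= /bump /= leqNgt ltn_ord /= add0n.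
  by rewrite (ltn_eqF (ltn_ord j)).
by move=> i _; rewrite !mxE /= eqxx mul0r.
Qed.

Section An.
Variable R : realType.

Lemma is_derive_sumseq (I : Type) (r : seq I) (g : I -> R -> R) (dg : I -> R) (t : R) :
  (forall i, is_derive t 1 (g i) (dg i)) ->
  is_derive t 1 (fun x => \sum_(i <- r) g i x) (\sum_(i <- r) dg i).
Proof.
move=> H; elim: r => [|i r IH].
  rewrite big_nil; under eq_fun do rewrite big_nil; exact: is_derive_cst.
rewrite big_cons; under eq_fun do rewrite big_cons.
exact: (is_deriveD (H i) IH).
Qed.

Lemma is_derive_mulc (g : R -> R) (dg c t : R) :
  is_derive t 1 g dg -> is_derive t 1 (fun x => c * g x) (c * dg).
Proof. move=> H; exact: (is_deriveZ c H). Qed.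

Lemma is_derive_prod n (h : 'I_n -> R -> R) (dh : 'I_n -> R) (t : R) :
  (forall i, is_derive t 1 (h i) (dh i)) ->
  is_derive t 1 (fun x => \prod_(i < n) h i x)
    (\sum_(k < n) \prod_(i < n) (if i == k then dh i else h i t)).
Proof.
elim: n h dh => [|n IH] h dh H.
  rewrite big_ord0; under eq_fun do rewrite big_ord0; exact: is_derive_cst.
under eq_fun do rewrite big_ord_recr.
have := is_deriveM (IH (fun i => h (widen_ord (leqnSn n) i)) (fun i => dh (widen_ord (leqnSn n) i)) (fun i => H _)) (H ord_max).
move=> D; apply: is_derive_eq D _.
rewrite big_ord_recr /= big_ord_recr /= eqxx addrC; congr (_ + _).
  rewrite /GRing.scale /=; congr (_ * _); apply: eq_bigr => i _.
  have -> : (widen_ord (leqnSn n) i == ord_max) = false.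
    by apply/negbTE; rewrite -val_eqE /= neq_ltn ltn_ord.
  by [].
rewrite /GRing.scale /= mulrC big_distrl /=; apply: eq_bigr => k _.
rewrite big_ord_recr /=.
have -> : (ord_max == widen_ord (leqnSn n) k) = false.
  by apply/negbTE; rewrite -val_eqE /= neq_ltn ltn_ord orbT.
congr (_ * _); apply: eq_bigr => i _.
Qed.


Lemma is_derive_detf (n : nat) (F : nat -> nat -> R -> R) (dF : nat -> nat -> R) (t : R) :
  (forall i j, is_derive t 1 (F i j) (dF i j)) ->
  is_derive t 1 (fun x => detf n (fun i j => F i j x))
   (\sum_(k < n) detf n (fun i j => if i == k then dF i j else F i j t)).
Proof.
move=> H.
have -> : (fun x => detf n (fun i j => F i j x)) =
   (fun x => \sum_(s : 'S_n) (-1) ^+ s * \prod_(i < n) F i (s i) x).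
  apply/funext => x; rewrite /detf /determinant; apply: eq_bigr => s _.
  by congr (_ * _); apply: eq_bigr => i _; rewrite mxE.
apply: is_derive_eq.
  apply: (@is_derive_sumseq _ _ _ (fun s : 'S_n => (-1) ^+ s *
     \sum_(k < n) \prod_(i < n) (if i == k then dF i (s i) else F i (s i) t))) => s.
  apply: is_derive_mulc.
  by apply: (is_derive_prod (h := fun i => F i (s i))) => i; exact: H.
under eq_bigr do rewrite big_distrr.
rewrite exchange_big /=; apply: eq_bigr => k _.
rewrite /detf /determinant /=; apply: eq_bigr => s _.
congr (_ * _); apply: eq_bigr => i _; rewrite mxE.
by rewrite -val_eqE /=.
Qed.

Lemma is_derive_wr (y : nat -> R -> R) (m : nat) (t : R) :
  (forall r c, is_derive t 1 (derive1n r (y c)) (derive1n r.+1 (y c) t)) ->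
  is_derive t 1 (fun x => detf m.+1 (fun i j => derive1n i (y j) x))
    (detf m.+1 (fun i j => derive1n (bump m i) (y j) t)).
Proof.
move=> H; apply: is_derive_eq.
  by apply: is_derive_detf => i j; exact: H.
rewrite big_ord_recr /= big1 ?add0r.
  apply: detf_ext => i j lti _; rewrite /bump.
  case: eqP => [->|ne]; first by rewrite leqnn add1n.
  by rewrite leqNgt (ltn_neqAle i m) -ltnS lti andbT; move/eqP: ne => ->.
move=> k _.
have lt : (k.+1 < m.+1)%N by rewrite ltnS ltn_ord.
rewrite /detf (@determinant_alternate _ _ _ (widen_ord (leqnSn m) k) (Ordinal lt)).
- by [].
- by rewrite -val_eqE /= neq_ltn ltnSn.
move=> j; rewrite !mxE /= eqxx.
by rewrite (gtn_eqF (ltnSn k)).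
Qed.

End An.

Lemma sign_sq (R : comNzRingType) m : (-1) ^+ m * (-1) ^+ m = 1 :> R.
Proof. by rewrite -exprD -signr_odd oddD addbb. Qed.

Lemma caseI_alg (R : fieldType) (a : nat -> nat -> R) m :
  detf m.+1 a * detf m.+1 (fun i j => a (bump m i) j.+1)
  - detf m.+1 (fun i j => a (bump m i) j) * detf m.+1 (fun i j => a i j.+1)
  = detf m (fun i j => a i j.+1) * detf m.+2 a.
Proof.
have H := DJ m (fun i j => a i (cyc m j)).
rewrite /Mf !addn1 addn2 in H.
rewrite detf_cyc // in H.
rewrite (@detf_ext _ m (fun i j => a i (cyc m j)) (fun i j => a i j.+1)) in H; last first.
  by move=> i j _ jm; rewrite /cyc jm.
rewrite (@detf_ext _ m.+1 (fun i j => a (if (i < m)%N then i else (m + 0)%N) (cyc m (if (j < m)%N then j else (m + 0)%N))) (fun i j => a i (cyc m j))) in H; last first.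
  by move=> i j im jm; congr a; [case: ifP => //; lia | congr cyc; case: ifP => //; lia].
rewrite (@detf_ext _ m.+1 (fun i j => a (if (i < m)%N then i else (m.+1)%N) (cyc m (if (j < m)%N then j else (m.+1)%N))) (fun i j => a (bump m i) j.+1)) in H; last first.
  move=> i j im jm; rewrite /bump /cyc; congr a; repeat case: ifP; lia.
rewrite (@detf_ext _ m.+1 (fun i j => a (if (i < m)%N then i else (m + 0)%N) (cyc m (if (j < m)%N then j else (m.+1)%N))) (fun i j => a i j.+1)) in H; last first.
  move=> i j im jm; rewrite /cyc; congr a; repeat case: ifP; lia.
rewrite (@detf_ext _ m.+1 (fun i j => a (if (i < m)%N then i else (m.+1)%N) (cyc m (if (j < m)%N then j else (m + 0)%N))) (fun i j => a (bump m i) (cyc m j))) in H; last first.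
  move=> i j im jm; rewrite /bump; congr a; [|congr cyc]; repeat case: ifP; lia.
rewrite detf_cyc // in H.
rewrite (detf_cyc (fun i j => a (bump m i) j)) // in H.
set s := (-1) ^+ m : R in H.
have s2 : s * s = 1 by rewrite /s sign_sq.
have sn : s != 0 by rewrite /s signr_eq0.
apply: (mulfI sn).
move: H.
set A := detf m.+2 a. set B := detf m (fun i j => a i j.+1).
set C := detf m.+1 a. set D := detf m.+1 (fun i j => a (bump m i) j.+1).
set E := detf m.+1 (fun i j => a i j.+1). set G := detf m.+1 (fun i j => a (bump m i) j).
move=> H.
have -> : s * (B * A) = s * A * B by ring.
rewrite H. ring.
Qed.

Lemma ifE0 n i : (i < n.+1)%N -> (if (i < n)%N then i else (n + 0)%N) = i.
Proof. by move=> lt; case: ifP => //; lia. Qed.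
Lemma ifE1 n i : (i < n.+1)%N -> (if (i < n)%N then i else n.+1) = bump n i.
Proof. by move=> lt; rewrite /bump; case: ifP; lia. Qed.

Lemma caseII_alg (R : fieldType) (a : nat -> nat -> R) n :
  detf n.+1 (fun i j => a i.+1 j) * detf n.+2 (fun i j => a (bump n.+1 i) j)
  - detf n.+1 (fun i j => a (bump n i).+1 j) * detf n.+2 a
  = detf n.+1 a * detf n.+2 (fun i j => a i.+1 j).
Proof.
pose F i j := if j == n.+2 then (i == 0%N)%:R else a i j.
have H := DJ n.+1 F.
have E0 : detf (n.+1 + 2) F = (-1) ^+ n.+2 * detf n.+2 (fun i j => a i.+1 j).
  by rewrite addn2 detf_e0.
have E1 : detf n.+1 F = detf n.+1 a.
  by apply: detf_ext => i j _ jn; rewrite /F ifF //; lia.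
have E00 : Mf n.+1 F 0 0 = detf n.+2 a.
  rewrite /Mf addn1; apply: detf_ext => i j il jl; rewrite /F !ifE0 //.
  by case: ifP => //; lia.
have E10 : Mf n.+1 F 1 0 = detf n.+2 (fun i j => a (bump n.+1 i) j).
  rewrite /Mf addn1; apply: detf_ext => i j il jl; rewrite /F ifE0 // ifE1 //.
  by case: ifP => //; lia.
have E11 : Mf n.+1 F 1 1 = (-1) ^+ n.+1 * detf n.+1 (fun i j => a (bump n i).+1 j).
  rewrite /Mf addn1 (@detf_ext _ _ _ (fun i j => if j == n.+1 then (i == 0%N)%:R
          else a (bump n.+1 i) j)); last first.
    move=> i j il jl; rewrite /F !ifE1 // /bump.
    case: ifP => H1; case: ifP => H2 //; try lia.
    - by case: i il => [|i] il /=; rewrite ?ltn0 ?addnS.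
    - by congr a; lia.
  rewrite detf_e0; congr (_ * _); apply: detf_ext => i j _ _; rewrite /bump; congr a; lia.
have E01 : Mf n.+1 F 0 1 = (-1) ^+ n.+1 * detf n.+1 (fun i j => a i.+1 j).
  rewrite /Mf addn1 (@detf_ext _ _ _ (fun i j => if j == n.+1 then (i == 0%N)%:R
          else a i j)); last first.
    move=> i j il jl; rewrite /F ifE0 // ifE1 // /bump.
    by case: ifP => H1; case: ifP => H2 //; try lia; congr a; lia.
  by rewrite detf_e0.
rewrite E0 E1 E00 E10 E11 E01 in H.
set s := (-1) ^+ n.+1 : R in H.
have sn : s != 0 by rewrite /s signr_eq0.
move: H; rewrite exprS -/s.
set A := detf n.+2 (fun i j => a i.+1 j). set B := detf n.+1 a.
set C := detf n.+2 a. set D := detf n.+1 (fun i j => a (bump n i).+1 j).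
set E := detf n.+1 (fun i j => a i.+1 j). set G := detf n.+2 (fun i j => a (bump n.+1 i) j).
move=> H; apply: (mulfI sn).
have -> : s * (B * A) = - (-1 * s * A * B) by ring.
rewrite H; ring.
Qed.

Section G.
Variables (R : realType) (p : nat) (f : nat -> R -> R).
Hypothesis hp : (0 < p)%N.
Hypothesis hsmooth : forall i : nat, (1 <= i <= p)%N ->
     forall (n : nat) (t : R), derivable (derive1n n (f i)) t 1.

Lemma derive1n_add (h : R -> R) r q : derive1n r (derive1n q h) = derive1n (r + q) h.
Proof. by rewrite /derive1n iterD. Qed.

Lemma gfun_smooth c r (t : R) :
  is_derive t 1 (derive1n r (gfun p f c)) (derive1n r.+1 (gfun p f c) t).
Proof.
rewrite /gfun !derive1n_add addSn derive1nS derive1E.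
apply: derivableP; apply: hsmooth.
by rewrite ltnS ltn_pmod.
Qed.

Lemma gfun_shift c : (0 < c)%N -> gfun p f (c + p) = derive1 (gfun p f c).
Proof.
move=> c0; rewrite /gfun.
have -> : (c + p).-1 = 1 * p + c.-1 by lia.
by rewrite divnMDl // modnMDl add1n derive1nS.
Qed.

Lemma ffunE x k m : (k < p.+1)%N -> x = (m * p.+1 + k)%N ->
  ffun p f (Posz x.+1) = wronskian (fun c => gfun p f (k.+1 + c)) m.
Proof.
move=> kl ->; rewrite /ffun divnMDl // modnMDl modn_small // divn_small // addn0.
by [].
Qed.

Lemma ffun_le0 (z : int) : z <= 0 -> ffun p f z = fun _ => 1.
Proof. by case: z => [[|n]|n] //. Qed.

Lemma derive1_wr (y : nat -> R -> R) m (t : R) :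
  (forall r c, is_derive t 1 (derive1n r (y c)) (derive1n r.+1 (y c) t)) ->
  derive1 (wronskian y m) t = detf m.+1 (fun i j => derive1n (bump m i) (y j) t).
Proof.
move=> H; rewrite derive1E.
have D := is_derive_wr m H.
exact: (@derive_val _ _ _ _ _ _ _ D).
Qed.

Lemma wrE (y : nat -> R -> R) m (t : R) :
  wronskian y m t = detf m.+1 (fun i j => derive1n i (y j) t).
Proof. by []. Qed.

End G.

Unset Implicit Arguments.
Theorem proposition4 (R : realType) (p : nat) (f : nat -> R -> R)
  (hp : (0 < p)%N)
  (hsmooth : forall i : nat, (1 <= i <= p)%N ->
     forall (n : nat) (t : R), derivable (derive1n n (f i)) t 1) :
  forall (j : nat), (0 < j)%N -> forall t : R,
    ffun p f (j%:Z - 1) t * derive1 (ffun p f j%:Z) t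
    - derive1 (ffun p f (j%:Z - 1)) t * ffun p f j%:Z t
    = ffun p f (j%:Z - p%:Z - 1) t * ffun p f (j%:Z + p%:Z) t.
Proof.
move=> [//|J] _ t.
have sm := gfun_smooth hp hsmooth.
have shiftE : forall r c, derive1n r (gfun p f (p.+1 + c)) t = derive1n r.+1 (gfun p f c.+1) t.
  by move=> r c; rewrite (_ : (p.+1 + c = c.+1 + p)%N) ?(gfun_shift _ hp) ?derive1Sn //; lia.
have E1 : (Posz J.+1 - 1 = Posz J)%R by lia.
have E2 : (Posz J.+1 + Posz p = Posz (J + p).+1)%R by lia.
have E3 : (Posz J.+1 - Posz p - 1 = Posz J - Posz p)%R by lia.
rewrite E1 E2 E3.
have hJ := divn_eq J p.+1.
have k0l : (J %% p.+1 < p.+1)%N by rewrite ltn_pmod.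
move: hJ k0l; set m := (J %/ p.+1)%N; case: (J %% p.+1)%N => [|k1] hJ k0l.
  rewrite addn0 in hJ.
  case Em : m hJ => [|m1] hJ.
    rewrite hJ mul0n add0n.
    rewrite (@ffun_le0 _ p f (Posz 0)) // (@ffun_le0 _ p f (Posz 0 - Posz p)); last lia.
    have -> : derive1 (fun _ : R => 1 : R) t = 0.
      by rewrite derive1E; exact: derive_cst.
    rewrite mul0r subr0 !mul1r.
    rewrite (ffunE f (x:=0%N) (k:=0%N) (m:=0%N)) // (ffunE f (x:=p) (k:=p) (m:=0%N)) //.
    rewrite derive1_wr // wrE.
    apply: detf_ext => i j il jl.
    have -> : i = 0%N by nia.
    have -> : j = 0%N by nia.
    by rewrite shiftE.
  pose a r c := derive1n r (gfun p f c.+1) t.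
  have W0 : ffun p f (Posz J) t = detf m1.+1 (fun i j => a i.+1 j).
    rewrite (_ : J = (m1 * p.+1 + p).+1)%N; last nia.
    rewrite (ffunE f (x:=(m1 * p.+1 + p)%N) (k:=p) (m:=m1)) ?wrE //.
    by apply: detf_ext => i j _ _; rewrite shiftE.
  have D0 : derive1 (ffun p f (Posz J)) t = detf m1.+1 (fun i j => a (bump m1 i).+1 j).
    rewrite (_ : J = (m1 * p.+1 + p).+1)%N; last nia.
    rewrite (ffunE f (x:=(m1 * p.+1 + p)%N) (k:=p) (m:=m1)); last lia; last nia.
    rewrite derive1_wr //.
    by apply: detf_ext => i j _ _; rewrite shiftE.
  have W1 : ffun p f (Posz J.+1) t = detf m1.+2 a.
    by rewrite (ffunE f (x:=J) (k:=0%N) (m:=m1.+1)) ?wrE //; nia.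
  have D1 : derive1 (ffun p f (Posz J.+1)) t = detf m1.+2 (fun i j => a (bump m1.+1 i) j).
    by rewrite (ffunE f (x:=J) (k:=0%N) (m:=m1.+1)) ?derive1_wr //; nia.
  have W2 : ffun p f (Posz (J + p).+1) t = detf m1.+2 (fun i j => a i.+1 j).
    rewrite (ffunE f (x:=(J + p)%N) (k:=p) (m:=m1.+1)) ?wrE //; last nia.
    by apply: detf_ext => i j _ _; rewrite shiftE.
  have Wl : ffun p f (Posz J - Posz p) t = detf m1.+1 a.
    rewrite (_ : Posz J - Posz p = Posz (m1 * p.+1 + 0).+1); last nia.
    by rewrite (ffunE f (x:=(m1 * p.+1 + 0)%N) (k:=0%N) (m:=m1)) ?wrE.
  rewrite W0 D0 W1 D1 W2 Wl.
  exact: caseII_alg.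
pose a r c := derive1n r (gfun p f (k1.+1 + c)) t.
have W0 : ffun p f (Posz J) t = detf m.+1 a.
  rewrite (_ : J = (m * p.+1 + k1).+1)%N; last nia.
  by rewrite (ffunE f (x:=(m * p.+1 + k1)%N) (k:=k1) (m:=m)) ?wrE //; nia.
have D0 : derive1 (ffun p f (Posz J)) t = detf m.+1 (fun i j => a (bump m i) j).
  rewrite (_ : J = (m * p.+1 + k1).+1)%N; last nia.
  rewrite (ffunE f (x:=(m * p.+1 + k1)%N) (k:=k1) (m:=m)); last lia; last nia.
  by rewrite derive1_wr.
have W1 : ffun p f (Posz J.+1) t = detf m.+1 (fun i j => a i j.+1).
  rewrite (ffunE f (x:=J) (k:=k1.+1) (m:=m)) ?wrE //.
  by apply: detf_ext => i j _ _; rewrite /a addSnnS.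
have D1 : derive1 (ffun p f (Posz J.+1)) t = detf m.+1 (fun i j => a (bump m i) j.+1).
  rewrite (ffunE f (x:=J) (k:=k1.+1) (m:=m)) // derive1_wr //.
  by apply: detf_ext => i j _ _; rewrite /a addSnnS.
have W2 : ffun p f (Posz (J + p).+1) t = detf m.+2 a.
  by rewrite (ffunE f (x:=(J + p)%N) (k:=k1) (m:=m.+1)) ?wrE //; nia.
have Wl : ffun p f (Posz J - Posz p) t = detf m (fun i j => a i j.+1).
  case E : m => [|m1].
    rewrite ffun_le0; last lia.
    by rewrite /detf det_mx00.
  rewrite (_ : Posz J - Posz p = Posz (m1 * p.+1 + k1.+1).+1); last lia.
  rewrite (ffunE f (x:=(m1 * p.+1 + k1.+1)%N) (k:=k1.+1) (m:=m1)) ?wrE //.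
  by apply: detf_ext => i j _ _; rewrite /a addSnnS.
rewrite W0 D0 W1 D1 W2 Wl.
exact: caseI_alg.
Qed.
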